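(* Let $\gamma$ be an orbit of the regularized planar two-center problem lying on a regular torus $\mathbb{T}$ with rotation number $W$, and suppose that $\gamma$ (followed for all times $\tau\in\mathbb{R}$) passes through a collision point at exactly one time. Then $W$ is irrational.
   Context: Fix $d>0$ and masses $m_1,m_2>0$ at $(-d,0)$ and $(d,0)$. A test particle moves with Hamiltonian $H=\tfrac12(p_x^2+p_y^2)-m_1/\sqrt{(x+d)^2+y^2}-m_2/\sqrt{(x-d)^2+y^2}$; energies $h<0$. Regularization: $(\lambda,\nu)\in\mathbb{R}\times(\mathbb{R}/2\pi\mathbb{Z})$ with $x+iy=d\sin(\nu+i\lambda)$ (a double cover branched over the centers), conjugate momenta $p_\lambda,p_\nu$, time change $dt=d^2(\cosh^2\lambda-\sin^2\nu)\,d\tau$. On $H=h$ the motion becomes the flow (time $\tau$, defined also through collisions) of $H_\lambda+H_\nu$ on its zero level, $H_\lambda=\tfrac12p_\lambda^2-d(m_1+m_2)\cosh\lambda-hd^2\cosh^2\lambda$, $H_\nu=\tfrac12p_\nu^2+d(m_1-m_2)\sin\nu+hd^2\sin^2\nu$; orbits lie in sets $\{H_\lambda=-g,\ H_\nu=g\}$ for a separation constant $g$. Regular torus: a compact connected component $\mathbb{T}=C_\lambda\times C_\nu$ of such a set with $-g$ a regular value of $H_\lambda$ and $g$ a regular value of $H_\nu$ ($C_\lambda$ a closed curve in the $(\lambda,p_\lambda)$-plane, $C_\nu$ a closed curve in the cylinder $(\mathbb{R}/2\pi\mathbb{Z})\times\mathbb{R}$). Rotation number $W=T_\nu/T_\lambda$,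 where $T_\lambda,T_\nu$ are the $\tau$-periods of the motions on $C_\lambda,C_\nu$; in angle coordinates $\theta_1$ along $C_\nu$, $\theta_2$ along $C_\lambda$ (each in $\mathbb{R}/\mathbb{Z}$, increasing uniformly in $\tau$ with period 1) orbits on $\mathbb{T}$ lift to lines $\theta_2=W\theta_1+\mathrm{const}$. Collision points are the points of $\mathbb{T}$ with $\lambda=0$ and $\nu\equiv\pm\pi/2\pmod{2\pi}$ (they project to the two centers). *)

(* Defs.v *)
From HB Require Import structures.
From mathcomp Require Import all_boot all_order all_algebra.
From mathcomp Require Import all_classical all_reals all_analysis.
Set Implicit Arguments. Unset Strict Implicit. Unset Printing Implicit Defensive.
Import Order.TTheory GRing.Theory Num.Theory.
Import numFieldNormedType.Exports.
Local Open Scope classical_set_scope.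
Local Open Scope ring_scope.

Section TwoCenter.
Variable R : realType.

Definition cosh (x : R) : R := (expR x + expR (- x)) / 2.

Definition Hlam (d m1 m2 h : R) (l p : R) : R :=
  p ^+ 2 / 2 - d * (m1 + m2) * cosh l - h * d ^+ 2 * (cosh l) ^+ 2.

(* H_nu(nu, p_nu), nu a real lift of the angle *)
Definition Hnu (d m1 m2 h : R) (n p : R) : R :=
  p ^+ 2 / 2 + d * (m1 - m2) * sin n + h * d ^+ 2 * (sin n) ^+ 2.

Definition d1 (F : R -> R -> R) (x y : R) : R := derive1 (fun x0 => F x0 y) x.
Definition d2 (F : R -> R -> R) (x y : R) : R := derive1 (fun y0 => F x y0) y.

Definition regular_value (F : R -> R -> R) (c : R) : Prop :=
  forall x y, F x y = c -> d1 F x y != 0 \/ d2 F x y != 0.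

(* Phase space R x (R/2piZ) x R^2, with the circle factor embedded in R^2:
   a point is ((lambda, p_lambda), ((cos nu, sin nu), p_nu)). *)
Definition phase_pt (l pl n pn : R) : (R * R) * ((R * R) * R) :=
  ((l, pl), ((cos n, sin n), pn)).

Definition level_set (d m1 m2 h g : R) : set ((R * R) * ((R * R) * R)) :=
  [set x | Hlam d m1 m2 h x.1.1 x.1.2 = - g /\
           exists n, x.2.1 = (cos n, sin n) /\ Hnu d m1 m2 h n x.2.2 = g].

Definition regular_torus (d m1 m2 h g : R) (T : set ((R * R) * ((R * R) * R))) :=
  [/\ exists2 x, level_set d m1 m2 h g x & T = connected_component (level_set d m1 m2 h g) x,
      compact T,
      regular_value (Hlam d m1 m2 h) (- g) &
      regular_value (Hnu d m1 m2 h) g].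

Definition is_orbit (d m1 m2 h : R) (l pl n pn : R -> R) : Prop :=
  forall t : R,
  [/\ is_derive t 1 l (d2 (Hlam d m1 m2 h) (l t) (pl t)),
      is_derive t 1 pl (- d1 (Hlam d m1 m2 h) (l t) (pl t)),
      is_derive t 1 n (d2 (Hnu d m1 m2 h) (n t) (pn t)) &
      is_derive t 1 pn (- d1 (Hnu d m1 m2 h) (n t) (pn t))].

Definition lam_period (l pl : R -> R) (P : R) : Prop :=
  forall t, l (t + P) = l t /\ pl (t + P) = pl t.
Definition least_lam_period (l pl : R -> R) (P : R) : Prop :=
  [/\ 0 < P, lam_period l pl P &
      forall P', 0 < P' -> lam_period l pl P' -> P <= P'].

(* T_nu: least positive period of the motion (nu mod 2pi, p_nu) on the cylinder *)
Definition nu_period (n pn : R -> R) (P : R) : Prop :=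
  forall t, (exists k : int, n (t + P) = n t + 2 * pi * k%:~R) /\ pn (t + P) = pn t.
Definition least_nu_period (n pn : R -> R) (P : R) : Prop :=
  [/\ 0 < P, nu_period n pn P &
      forall P', 0 < P' -> nu_period n pn P' -> P <= P'].

Definition collision_at (l n : R -> R) (t : R) : Prop :=
  l t = 0 /\ exists k : int,
    n t = pi / 2 + 2 * pi * k%:~R \/ n t = - (pi / 2) + 2 * pi * k%:~R.

End TwoCenter.

(* Main.v *)
Require Import Defs.
From HB Require Import structures.
From mathcomp Require Import all_boot all_order all_algebra.
From mathcomp Require Import all_classical all_reals all_analysis.
From mathcomp Require Import ring lra.
Import Order.TTheory GRing.Theory Num.Theory.
Import numFieldNormedType.Exports.
Local Open Scope classical_set_scope.
Local Open Scope ring_scope.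

Lemma lam_iter {R : realType} (l pl : R -> R) (P : R) :
  lam_period l pl P -> forall (n : nat) t, l (t + n%:R * P) = l t.
Proof.
move=> hP; elim=> [|n IH] t; first by rewrite mul0r addr0.
by rewrite -addn1 natrD mulrDl mul1r addrA (hP _).1 IH.
Qed.

Lemma nu_iter {R : realType} (n pn : R -> R) (P : R) :
  nu_period n pn P -> forall (m : nat) t,
  exists k : int, n (t + m%:R * P) = n t + 2 * pi * k%:~R.
Proof.
move=> hP; elim=> [|m IH] t; first by exists 0; rewrite mul0r addr0 mulr0 addr0.
have [k hk] := IH t.
have [[k' hk'] _] := hP (t + m%:R * P).
by exists (k + k'); rewrite -addn1 natrD mulrDl mul1r (addrA t) hk' hk intrD (mulrDr (2 * pi)) GRing.addrA.
Qed.

Theorem corollary4 (R : realType) (d m1 m2 h g : R)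
  (T : set ((R * R) * ((R * R) * R)))
  (lam plam nu pnu : R -> R) (Tlam Tnu : R) :
  0 < d -> 0 < m1 -> 0 < m2 -> h < 0 ->
  regular_torus d m1 m2 h g T ->
  is_orbit d m1 m2 h lam plam nu pnu ->
  (forall t, T (phase_pt (lam t) (plam t) (nu t) (pnu t))) ->
  least_lam_period lam plam Tlam ->
  least_nu_period nu pnu Tnu ->
  (exists t0, collision_at lam nu t0 /\
     forall t, collision_at lam nu t -> t = t0) ->
  @irrational R (Tnu / Tlam).
Proof.
move=> _ _ _ _ _ _ _ [Tl0 hTl _] [Tn0 hTn _] [t0 [[hl0 [k0 hn0]] uniq]].
move=> /rationalP [a [b hab]].
have rpos : 0 < Tnu / Tlam by rewrite divr_gt0.
have b0 : (0 < b)%N.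
  rewrite lt0n; apply/negP => /eqP b0; move: rpos; rewrite hab b0 invr0 mulr0.
  by rewrite ltxx.
have bR : 0 < (b%:R : R) by rewrite ltr0n.
have apos : 0 < (a%:~R : R).
  have -> : (a%:~R : R) = Tnu / Tlam * b%:R by rewrite hab mulfVK // gt_eqF.
  by rewrite mulr_gt0.
have [na ana] : exists na : nat, (a%:~R : R) = na%:R.
  exists `|a|%N; rewrite natr_absz gtr0_norm // -(ltr0z R) //.
have eqP' : (na%:R * Tlam : R) = b%:R * Tnu.
  have hT : Tnu = a%:~R / b%:R * Tlam by rewrite -hab mulfVK // gt_eqF.
  by rewrite -ana hT mulrA [b%:R * _]mulrC mulfVK // gt_eqF.
have Ppos : 0 < (na%:R * Tlam : R) by rewrite eqP' mulr_gt0.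
have hc : collision_at lam nu (t0 + na%:R * Tlam).
  split; first by rewrite (@lam_iter _ lam plam Tlam hTl).
  have [k hk] := @nu_iter _ nu pnu Tnu hTn b t0.
  rewrite eqP' hk; exists (k0 + k); rewrite intrD.
  by case: hn0 => ->; [left|right]; rewrite (mulrDr (2 * pi)) GRing.addrA.
have := uniq _ hc => /(congr1 (fun x => x - t0)).
rewrite GRing.addrAC subrr add0r => H.
by move: Ppos; rewrite H ltxx.
Qed.
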